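(* Let $K$ be an infinite field, $n\ge 2$, and let $p(x_1,\dots,x_m)\in K\langle x_1,\dots,x_m\rangle$ be a multilinear polynomial which, evaluated on $M_n(K)$, is neither a polynomial identity nor a central polynomial. Then $\operatorname{Im} p$ contains a matrix of the form $c_n e_{n,1}+\sum_{i=1}^{n-1}c_i e_{i,i+1}$ with $c_1,\dots,c_n\neq 0$. Consequently, when $\operatorname{char}K$ is $0$ or prime to $n$, $\operatorname{Im} p$ contains a matrix whose eigenvalues (in an algebraic closure of $K$) are $c,c\varepsilon,\dots,c\varepsilon^{n-1}$ for some $c\neq 0$, where $\varepsilon$ is a primitive $n$-th root of $1$.
   Context: $K\langle x_1,\dots,x_m\rangle$ is the free associative algebra (noncommutative polynomials). A polynomial is multilinear if it has the form $\sum_{\sigma\in S_m}c_\sigma x_{\sigma(1)}\cdots x_{\sigma(m)}$ with $c_\sigma\in K$. For an algebra $R$, $\operatorname{Im} p=\{p(a_1,\dots,a_m): a_i\in R\}$. $p$ is a polynomial identity (PI) of $R$ if $\operatorname{Im} p=\{0\}$, and a central polynomial if $\operatorname{Im} p$ is contained in the center of $R$ (the scalar matrices for $R=M_n(K)$) but $p$ is not a PI. $e_{i,j}$ denote the matrix units. *)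

(* Defs.v *)
From HB Require Import structures.
From mathcomp Require Import all_boot all_order all_algebra all_fingroup.
Set Implicit Arguments. Unset Strict Implicit. Unset Printing Implicit Defensive.
Import GRing.Theory.
Local Open Scope ring_scope.

Definition infinite_field (K : fieldType) : Prop :=
  forall s : seq K, exists x : K, x \notin s.

(* A multilinear polynomial in x_1..x_m is given by its coefficients
   c_sigma, sigma in S_m:  p = \sum_sigma c_sigma x_{sigma 1} ... x_{sigma m}. *)
Definition mlin_eval (K : fieldType) (n m : nat) (c : {perm 'I_m} -> K)
  (a : 'I_m -> 'M[K]_n) : 'M[K]_n :=
  \sum_(s : {perm 'I_m}) c s *: \prod_(i < m) a (s i).

Definition mlin_PI (K : fieldType) (n m : nat) (c : {perm 'I_m} -> K) : Prop :=
  forall a : 'I_m -> 'M[K]_n, mlin_eval c a = 0.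

Definition mlin_central (K : fieldType) (n m : nat) (c : {perm 'I_m} -> K) : Prop :=
  (forall a : 'I_m -> 'M[K]_n, is_scalar_mx (mlin_eval c a)) /\ ~ mlin_PI n c.

(* The matrix c_n e_{n,1} + \sum_{i<n} c_i e_{i,i+1} (0-indexed: entry (i, i+1 mod n) is c i). *)
Definition cyc_mx (K : fieldType) (n : nat) (c : 'I_n -> K) : 'M[K]_n :=
  \matrix_(i, j) (if val j == ((val i).+1 %% n)%N then c i else 0).

(* Main.v *)
Require Import Defs.
From HB Require Import structures.
From mathcomp Require Import all_boot all_order all_algebra all_fingroup all_field.
From mathcomp Require Import cyclic zify.
From Stdlib Require Import Classical.
Set Implicit Arguments. Unset Strict Implicit. Unset Printing Implicit Defensive.
Import GRing.Theory.
Local Open Scope ring_scope.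

Lemma eq_mlin (K : fieldType) n m (c : {perm 'I_m} -> K) a b :
  (forall i, a i = b i) -> mlin_eval (n:=n) c a = mlin_eval c b.
Proof.
move=> e; rewrite /mlin_eval; apply: eq_bigr => s _; congr (_ *: _).
by apply: eq_bigr => i _; rewrite e.
Qed.

Lemma prod_lin1 (K : fieldType) n (T : eqType) (r : seq T) (P : pred T)
   (H : T -> 'M[K]_n) (I : finType) (w : I -> K) (B : I -> 'M[K]_n) :
  count P r = 1%N ->
  \prod_(i <- r) (if P i then \sum_u w u *: B u else H i) =
  \sum_u w u *: \prod_(i <- r) (if P i then B u else H i).
Proof.
elim: r => [//|x r IH] /=.
case Px: (P x) => /= c1.
  have c0 : count P r = 0%N by move: c1; rewrite add1n => -[].
  have eqH : forall X, \prod_(i <- r) (if P i then X else H i) = \prod_(i <- r) H i.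
    move=> X; rewrite big_seq_cond [RHS]big_seq_cond; apply: eq_bigr => i /andP[ir _].
    have : ~~ P i.
      apply/negP => Pi; have : has P r by apply/hasP; exists i.
      by rewrite has_count c0.
    by move/negPf->.
  rewrite big_cons Px eqH mulr_suml; apply: eq_bigr => u _.
  by rewrite big_cons Px eqH -!mulmxE scalemxAl.
rewrite big_cons Px IH; last by move: c1; rewrite add0n.
rewrite mulr_sumr; apply: eq_bigr => u _.
by rewrite big_cons Px -!mulmxE scalemxAr.
Qed.

Definition upd (K : fieldType) n m (a : 'I_m -> 'M[K]_n) k x :=
  fun j => if j == k then x else a j.

Lemma mlin_lin (K : fieldType) n m (c : {perm 'I_m} -> K) a k
   (I : finType) (w : I -> K) (B : I -> 'M[K]_n) :
  mlin_eval c (upd a k (\sum_u w u *: B u)) =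
  \sum_u w u *: mlin_eval c (upd a k (B u)).
Proof.
rewrite /mlin_eval.
under eq_bigr => s _.
  have cnt : count (fun i => s i == k) (index_enum 'I_m) = 1%N.
    rewrite (eq_count (a2 := pred1 (s^-1 k)%g)); last first.
      by move=> i /=; apply/eqP/eqP => [<-|->]; rewrite ?permK ?permKV.
    by rewrite count_uniq_mem ?index_enum_uniq ?mem_index_enum.
  rewrite /upd (prod_lin1 (fun i => a (s i)) w B cnt) scaler_sumr.
  over.
rewrite exchange_big /=; apply: eq_bigr => u _.
rewrite scaler_sumr; apply: eq_bigr => s _.
by rewrite !scalerA mulrC.
Qed.

Lemma span_units (K : fieldType) n m (c : {perm 'I_m} -> K) (z0 : 'I_n) (S : 'M[K]_n -> bool) :
  S 0 -> (forall x y, S x -> S y -> S (x + y)) -> (forall k x, S x -> S (k *: x)) ->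
  (forall r t : 'I_m -> 'I_n, S (mlin_eval c (fun i => delta_mx (r i) (t i)))) ->
  forall a, S (mlin_eval c a).
Proof.
move=> S0 SD SZ Hu.
suff H: forall j a (r t : 'I_m -> 'I_n),
    (forall i : 'I_m, (j <= i)%N -> a i = delta_mx (r i) (t i)) -> S (mlin_eval c a).
  by move=> a; apply: (H m a (fun _ => z0) (fun _ => z0)) => i; rewrite leqNgt ltn_ord.
elim=> [|j IH] a r t Ha.
  by rewrite (@eq_mlin _ _ _ c _ (fun i => delta_mx (r i) (t i))) // => i; apply: Ha.
case: (ltnP j m) => hj; last first.
  by apply: (IH a r t) => i ji; have := leq_trans hj ji; rewrite leqNgt ltn_ord.
pose k := Ordinal hj.
rewrite (@eq_mlin _ _ _ c _ (upd a k (\sum_(p : 'I_n * 'I_n) a k p.1 p.2 *: delta_mx p.1 p.2))); last first.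
  move=> i; rewrite /upd; case: eqP => [->|//].
  by rewrite -(pair_bigA _ (fun u v => a k u v *: delta_mx u v)) -matrix_sum_delta.
rewrite mlin_lin; apply: (big_ind S) => // p _; apply: SZ.
apply: (IH _ (fun i => if i == k then p.1 else r i) (fun i => if i == k then p.2 else t i)).
move=> i ji; rewrite /upd; case: eqP => // /eqP ik; apply: Ha.
by rewrite ltn_neqAle ji andbT; apply: contra ik => /eqP e; apply/eqP/val_inj.
Qed.

Lemma sum_neq0 (R : nmodType) (I : finType) (F : I -> R) :
  \sum_i F i != 0 -> exists i, F i != 0.
Proof.
move=> H; apply/not_all_not_ex => Hn; move/eqP: H; apply.
by apply: big1 => i _; apply/eqP; apply/negPn/negP; exact: Hn.
Qed.

Lemma prod_delta_flow (K : fieldType) n m (G : zmodType) (h : 'I_n -> G) (l : seq 'I_m)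
  (r t : 'I_m -> 'I_n) x y :
  (\prod_(i <- l) delta_mx (r i) (t i) : 'M[K]_n) x y != 0 ->
  h y - h x = \sum_(i <- l) (h (t i) - h (r i)).
Proof.
elim: l x => [|j l IH] x /=.
  by rewrite big_nil mxE; case: (eqVneq x y) => [->|] /=; rewrite ?subrr ?big_nil ?eqxx.
rewrite big_cons -mulmxE mxE => /sum_neq0 [z]; rewrite mxE.
case: (eqVneq x (r j)) => [->|_]; last by rewrite /= mul0r eqxx.
rewrite /=; case: (eqVneq z (t j)) => [->|_]; last by rewrite /= mul0r eqxx.
rewrite mul1r => /IH e; rewrite big_cons -e.
by rewrite [RHS]addrC [RHS]addrA subrK.
Qed.

Lemma mlin_flow (K : fieldType) n m (c : {perm 'I_m} -> K) (G : zmodType) (h : 'I_n -> G)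
  (r t : 'I_m -> 'I_n) x y :
  mlin_eval c (fun i => delta_mx (r i) (t i)) x y != 0 ->
  h y - h x = \sum_i (h (t i) - h (r i)).
Proof.
rewrite /mlin_eval summxE => /sum_neq0 [s]; rewrite mxE => Hs.
have : (\prod_(i < m) delta_mx (r (s i)) (t (s i)) : 'M[K]_n) x y != 0.
  by apply: contra Hs => /eqP ->; rewrite mulr0.
rewrite -(big_map s xpredT (fun j => delta_mx (r j) (t j))) => /(prod_delta_flow h) ->.
by rewrite big_map [RHS](reindex_inj (@perm_inj _ s)).
Qed.

Lemma prod_conj (K : fieldType) n (I : Type) (l : seq I) (g h : 'M[K]_n) (F : I -> 'M[K]_n) :
  g * h = 1 -> h * g = 1 ->
  \prod_(i <- l) (g * F i * h) = g * \prod_(i <- l) F i * h.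
Proof.
move=> gh hg; elim: l => [|j l IH]; first by rewrite !big_nil mulr1 gh.
rewrite !big_cons IH !mulrA; congr (_ * _).
by rewrite -[g * F j * h * g]mulrA hg mulr1.
Qed.

Lemma mlin_conj (K : fieldType) n m (c : {perm 'I_m} -> K) (g h : 'M[K]_n) a :
  g * h = 1 -> h * g = 1 ->
  mlin_eval c (fun i => g * a i * h) = g * mlin_eval c a * h.
Proof.
move=> gh hg; rewrite /mlin_eval mulr_sumr mulr_suml; apply: eq_bigr => s _.
by rewrite (prod_conj _ _ gh hg) -!mulmxE scalemxAl scalemxAr.
Qed.

Lemma scaler_prodM (K : fieldType) n (I : Type) (r : seq I) (a : I -> K) (B : I -> 'M[K]_n) :
  \prod_(i <- r) (a i *: B i) = (\prod_(i <- r) a i) *: \prod_(i <- r) B i.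
Proof.
elim: r => [|j r IH]; first by rewrite !big_nil scale1r.
by rewrite !big_cons IH -!mulmxE -scalemxAl -scalemxAr scalerA.
Qed.

Lemma mlin_expand (K : fieldType) n m (c : {perm 'I_m} -> K) (J : finType)
   (w : 'I_m -> J -> K) (B : 'I_m -> J -> 'M[K]_n) :
  mlin_eval c (fun i => \sum_k w i k *: B i k) =
  \sum_(f : {ffun 'I_m -> J}) (\prod_i w i (f i)) *: mlin_eval c (fun i => B i (f i)).
Proof.
have E : forall s : {perm 'I_m}, \prod_i (\sum_k w (s i) k *: B (s i) k) =
    \sum_(f : {ffun 'I_m -> J}) (\prod_i w i (f i)) *: \prod_i B (s i) (f (s i)).
  move=> s; rewrite (bigA_distr_bigA (fun j k => w (s j) k *: B (s j) k)).
  rewrite (reindex (fun f : {ffun 'I_m -> J} => [ffun j => f (s j)])); last first.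
    exists (fun f : {ffun 'I_m -> J} => [ffun i => f ((s^-1)%g i)]) => f _;
      by apply/ffunP => i; rewrite !ffunE ?permK ?permKV.
  apply: eq_bigr => f _; rewrite scaler_prodM; congr (_ *: _).
    rewrite [RHS](reindex_inj (@perm_inj _ s)); apply: eq_bigr => i _; by rewrite ffunE.
  by apply: eq_bigr => i _; rewrite ffunE.
rewrite /mlin_eval.
under eq_bigr => s _ do rewrite E scaler_sumr.
rewrite exchange_big; apply: eq_bigr => f _.
rewrite scaler_sumr; apply: eq_bigr => s _.
by rewrite !scalerA mulrC.
Qed.

Lemma valZp1 N (i : 'I_N.+2) : val (i + 1) = ((val i).+1 %% N.+2)%N.
Proof. by rewrite /= (modn_small (_ : 1 < N.+2)%N) // addn1. Qed.

Lemma digits_inj n m (f g : 'I_m -> 'I_n) :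
  (\sum_(i < m) f i * n ^ i = \sum_(i < m) g i * n ^ i)%N -> forall i, f i = g i.
Proof.
elim: m f g => [|m IH] f g; first by move=> _ [].
have E : forall h : 'I_m.+1 -> 'I_n, (\sum_(i < m.+1) h i * n ^ i =
     h ord0 + n * \sum_(i < m) h (lift ord0 i) * n ^ i)%N.
  move=> h; rewrite big_ord_recl expn0 muln1 big_distrr /=; congr (_ + _)%N.
  by apply: eq_bigr => i _; rewrite expnS mulnCA.
rewrite !E => e.
have f0 := ltn_ord (f ord0); have g0 := ltn_ord (g ord0).
have e0 : f ord0 = g ord0.
  apply/val_inj => /=; move: e; set X := (\sum_(i < m) _)%N; set Y := (\sum_(i < m) _)%N.
  move=> e; have := congr1 (modn^~ n) e => /=.
  by rewrite [(f ord0 + _)%N]addnC [(g ord0 + _)%N]addnC ![(n * _)%N]mulnC !modnMDl !modn_small.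
have eXY : (\sum_(i < m) f (lift ord0 i) * n ^ i = \sum_(i < m) g (lift ord0 i) * n ^ i)%N.
  have n0 : (0 < n)%N := leq_ltn_trans (leq0n _) f0.
  by move: e; rewrite e0 => /addnI /eqP; rewrite eqn_pmul2l // => /eqP.
move=> i; case: (unliftP ord0 i) => [j ->|->] //.
exact: (IH (fun j => f (lift ord0 j)) (fun j => g (lift ord0 j)) eXY j).
Qed.

Lemma infinite_nonroot (K : fieldType) (q : {poly K}) :
  infinite_field K -> q != 0 -> exists T, ~~ root q T.
Proof.
move=> inf q0.
have [s [us ss]] : exists s : seq K, uniq s /\ size s = size q.
  elim: (size q) => [|k [s [us ss]]]; first by exists [::].
  have [x xs] := inf s; exists (x :: s); by rewrite /= xs us ss.
case: (boolP (all (root q) s)) => [al|/allPn [x _ nx]]; last by exists x.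
by move: q0; rewrite (roots_geq_poly_eq0 al us) ?ss ?eqxx.
Qed.

Lemma conj_perm (K : fieldType) n (s : {perm 'I_n}) (A : 'M[K]_n) :
  perm_mx s * A * perm_mx s^-1 = \matrix_(i, j) A (s i) (s j).
Proof.
rewrite -!mulmxE -mulmxA -col_permE -row_permE.
by apply/matrixP => i j; rewrite !mxE.
Qed.

Lemma perm_mx_inv (K : fieldType) n (s : {perm 'I_n}) :
  perm_mx s * perm_mx s^-1 = 1 :> 'M[K]_n /\ perm_mx s^-1 * perm_mx s = 1 :> 'M[K]_n.
Proof. by rewrite -!mulmxE -!perm_mxM mulgV mulVg perm_mx1. Qed.

Lemma core (K : fieldType) N m (c : {perm 'I_m} -> K) (r t : 'I_m -> 'I_N.+2) x0 y0 :
  infinite_field K -> x0 != y0 ->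
  mlin_eval c (fun i => delta_mx (r i) (t i)) x0 y0 != 0 ->
  exists (a : 'I_m -> 'M[K]_N.+2) (d : 'I_N.+2 -> K),
    (forall i, d i != 0) /\ mlin_eval c a = cyc_mx d.
Proof.
move=> inf xy E0nz.
pose pi1 := tperm x0 (0%R : 'I_N.+2).
have v1 : pi1 y0 != 0.
  apply: contra xy => /eqP e; apply/eqP; apply: (@perm_inj _ pi1).
  by rewrite e /pi1 tpermL.
pose pi := (pi1 * tperm (pi1 y0) (1%R : 'I_N.+2))%g.
have pix : pi x0 = 0 by rewrite /pi permM /pi1 tpermL tpermD // eq_sym.
have piy : pi y0 = 1 by rewrite /pi permM tpermL.
pose sh (k : 'I_N.+2) := perm (@addIr _ k).
pose rho k := (pi * sh k)%g.
have rhoE : forall k z, rho k z = pi z + k by move=> k z; rewrite /rho permM permE.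
pose E0 := mlin_eval c (fun i => delta_mx (r i) (t i)).
have flow0 : 1 = \sum_i ((pi (t i) : 'I_N.+2) - pi (r i)).
  by rewrite -(mlin_flow (fun z => pi z) E0nz) pix piy subr0.
pose Ef (f : {ffun 'I_m -> 'I_N.+2}) :=
  mlin_eval c (fun i => delta_mx (rho (f i) (r i)) (rho (f i) (t i))).
have cyc : forall f x y, Ef f x y != 0 -> y = x + 1.
  move=> f x y; rewrite /Ef => /(mlin_flow (G := 'I_N.+2) id) /= e.
  have e1 : y - x = 1.
    rewrite e flow0; apply: eq_bigr => i _.
    by rewrite !rhoE opprD addrACA subrr addr0.
  by rewrite -e1 addrC subrK.
have diagf : forall k : 'I_N.+2, Ef [ffun => k] k (k + 1) != 0.
  move=> k; pose s := ((rho k)^-1)%g.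
  have [P1 P2] := perm_mx_inv K s.
  have dE : forall a b, perm_mx s * delta_mx a b * perm_mx s^-1 = delta_mx (rho k a) (rho k b) :> 'M[K]_N.+2.
    move=> a b; rewrite conj_perm; apply/matrixP => i j; rewrite !mxE.
    have sE : forall z u, (s z == u) = (z == rho k u).
      by move=> z u; apply/eqP/eqP => [<-|->]; rewrite ?permKV ?permK.
    by rewrite !sE.
  have -> : Ef [ffun => k] = perm_mx s * E0 * perm_mx s^-1.
    rewrite -mlin_conj //; apply: eq_mlin => i; by rewrite dE ffunE.
  rewrite conj_perm mxE.
  have -> : s k = x0 by apply: (@perm_inj _ (rho k)); rewrite permKV rhoE pix add0r.
  have -> : s (k + 1) = y0 by apply: (@perm_inj _ (rho k)); rewrite permKV rhoE piy addrC.
  exact: E0nz.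
pose Nf (f : {ffun 'I_m -> 'I_N.+2}) := (\sum_i f i * N.+2 ^ i)%N.
pose q (x : 'I_N.+2) : {poly K} := \sum_(f : {ffun 'I_m -> 'I_N.+2}) Ef f x (x + 1) *: 'X^(Nf f).
have qnz : forall x, q x != 0.
  move=> x; apply/eqP => q0; move: (diagf x); apply/negP; rewrite negbK.
  have := congr1 (fun p : {poly K} => p`_(Nf [ffun => x])) q0.
  rewrite coef0 /q coef_sum (bigD1 [ffun => x]) //= coefZ coefXn eqxx mulr1 big1 ?addr0 => [->//|].
  move=> f fx; rewrite coefZ coefXn; case: eqP => [e|]; last by rewrite mulr0.
  exfalso; move/negP: fx; apply; apply/eqP/ffunP => i.
  by symmetry; exact: (digits_inj e).
have Qnz : \prod_x q x != 0 by apply/prodf_neq0 => x _; exact: qnz.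
have [T hT] := infinite_nonroot inf Qnz.
have qT : forall x, (q x).[T] != 0.
  by move: hT; rewrite /root horner_prod => /prodf_neq0 H x; exact: H.
pose a (i : 'I_m) := \sum_(k : 'I_N.+2) (T ^+ (k * N.+2 ^ i)%N) *: delta_mx (rho k (r i)) (rho k (t i)).
have entry : forall x y, mlin_eval c a x y = \sum_f T ^+ (Nf f) * Ef f x y.
  move=> x y; rewrite /a mlin_expand summxE; apply: eq_bigr => f _.
  by rewrite mxE prodrXr.
have qE : forall x, (q x).[T] = mlin_eval c a x (x + 1).
  move=> x; rewrite entry /q horner_sum; apply: eq_bigr => f _.
  by rewrite hornerZ hornerXn mulrC.
exists a, (fun x => mlin_eval c a x (x + 1)); split.
  by move=> x; rewrite -qE.
apply/matrixP => i j; rewrite /cyc_mx mxE; case: ifP => [/eqP hj|hj].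
  by have -> : j = i + 1 by apply: val_inj; rewrite valZp1 hj.
rewrite entry; apply: big1 => f _.
case: (eqVneq (Ef f i j) 0) => [->|/cyc e]; first by rewrite mulr0.
by move: hj; rewrite e valZp1 eqxx.
Qed.

Lemma mxaddE (K : fieldType) n (A B : 'M[K]_n) i j : (A + B) i j = A i j + B i j.
Proof. by rewrite mxE. Qed.
Lemma mxoppE (K : fieldType) n (A : 'M[K]_n) i j : (- A) i j = - A i j.
Proof. by rewrite mxE. Qed.
Lemma mxscaleE (K : fieldType) n (A : 'M[K]_n) k i j : (k *: A) i j = k * A i j.
Proof. by rewrite mxE. Qed.
Lemma mxdeltaL (K : fieldType) n u v (A : 'M[K]_n) i j :
  (delta_mx u v * A) i j = (i == u)%:R * A v j.
Proof.
rewrite -mulmxE mxE (bigD1 v) //= big1 ?addr0; first by rewrite mxE eqxx andbT.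
by move=> k kv; rewrite mxE (negbTE kv) andbF mul0r.
Qed.
Lemma mxdeltaR (K : fieldType) n u v (A : 'M[K]_n) i j :
  (A * delta_mx u v) i j = A i u * (j == v)%:R.
Proof.
rewrite -mulmxE mxE (bigD1 u) //= big1 ?addr0; first by rewrite mxE eqxx.
by move=> k ku; rewrite mxE (negbTE ku) mulr0.
Qed.

Lemma offdiag (K : fieldType) N m (c : {perm 'I_m} -> K) :
  ~ mlin_PI N.+2 c -> ~ mlin_central N.+2 c ->
  exists (r t : 'I_m -> 'I_N.+2) x0 y0,
    x0 != y0 /\ mlin_eval c (fun i => delta_mx (r i) (t i)) x0 y0 != 0.
Proof.
move=> nPI nC.
have [a na] : exists a, ~~ is_scalar_mx (mlin_eval (n := N.+2) c a).
  apply: NNPP => H; apply: nC; split => // a; apply: NNPP => h; apply: H.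
  by exists a; apply/negP.
have [b [u [v [uv nb]]]] : exists b u v, u != v /\ mlin_eval (n := N.+2) c b u v != 0.
  pose A := mlin_eval c a.
  case: (boolP [exists u, exists v, (u != v) && (A u v != 0)]).
    by move=> /existsP [u /existsP [v /andP [uv nz]]]; exists a, u, v.
  move=> H.
  have diagA : forall u v, u != v -> A u v = 0.
    move=> u v uv; apply/eqP; apply: contraNT H => nz.
    by apply/existsP; exists u; apply/existsP; exists v; rewrite uv nz.
  have [u Au] : exists u, A u u != A 0 0.
    apply: NNPP => H'; move/negP: na; apply; apply/is_scalar_mxP; exists (A 0 0).
    apply/matrixP => i j; rewrite mxE; case: (eqVneq i j) => [<-|ij].
      rewrite mulr1n; apply: NNPP => hi; apply: H'; exists i; apply/eqP => e; exact: hi e.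
    by rewrite mulr0n diagA.
  have u0 : (0 : 'I_N.+2) != u by apply: contra Au => /eqP <-.
  pose d := delta_mx u (0 : 'I_N.+2) : 'M[K]_N.+2.
  have dd : d * d = 0 by rewrite -mulmxE mul_delta_mx_cond (negbTE u0) mulr0n.
  have gh : (1 + d) * (1 - d) = 1 by rewrite mulrDl mul1r mulrBr mulr1 dd subr0 subrK.
  have hg : (1 - d) * (1 + d) = 1 by rewrite mulrBl mul1r mulrDr mulr1 dd addr0 addrK.
  exists (fun i => (1 + d) * a i * (1 - d)), u, 0; split; first by rewrite eq_sym.
  rewrite mlin_conj // -/A.
  have -> : (1 + d) * A * (1 - d) = A + d * A - (A * d + d * A * d).
    by rewrite mulrDl mul1r mulrBr mulr1 mulrDl.
  rewrite !(mxaddE, mxoppE) /d !(mxdeltaL, mxdeltaR) !eqxx !mul1r !mulr1.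
  rewrite (diagA _ _ u0) (diagA u 0) 1?eq_sym // add0r addr0.
  by rewrite eq_sym subr_eq0 eq_sym.
pose S := fun M : 'M[K]_N.+2 => [forall x, forall y, (x != y) ==> (M x y == 0)].
have S0 : S 0.
  by apply/forallP => x; apply/forallP => y; rewrite mxE eqxx implybT.
have SD : forall X Y, S X -> S Y -> S (X + Y).
  move=> X Y /forallP HX /forallP HY; apply/forallP => x; apply/forallP => y; apply/implyP => xy.
  rewrite mxE; move: (HX x) (HY x) => /forallP/(_ y)/implyP/(_ xy)/eqP -> /forallP/(_ y)/implyP/(_ xy)/eqP ->.
  by rewrite addr0.
have SZ : forall k X, S X -> S (k *: X).
  move=> k X /forallP HX; apply/forallP => x; apply/forallP => y; apply/implyP => xy.
  rewrite mxE; move: (HX x) => /forallP/(_ y)/implyP/(_ xy)/eqP ->.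
  by rewrite mulr0.
apply: NNPP => H.
have allS : forall r t : 'I_m -> 'I_N.+2, S (mlin_eval c (fun i => delta_mx (r i) (t i))).
  move=> r t; apply/forallP => x; apply/forallP => y; apply/implyP => xy; apply/eqP.
  by apply: NNPP => nz; apply: H; exists r, t, x, y; split => //; apply/eqP.
have := @span_units K N.+2 m c 0 S S0 SD SZ allS b.
by move=> /forallP/(_ u)/forallP/(_ v); rewrite uv (negbTE nb).
Qed.

Lemma prim_root_closed (L : closedFieldType) n :
  (0 < n)%N -> n%:R != 0 :> L -> exists e : L, n.-primitive_root e.
Proof.
move=> n0 nz.
have [rs Ers] := closed_field_poly_normal ('X^n - 1 : {poly L}).
rewrite (monicP (monic_Xn_sub_1 _ n0)) scale1r in Ers.
have urs : uniq rs by rewrite -separable_prod_XsubC -Ers separable_Xn_sub_1.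
have szrs : size rs = n.
  by have := size_Xn_sub_1 L n0; rewrite Ers size_prod_XsubC => -[].
have allr : all n.-unity_root rs.
  apply/allP => x xrs; rewrite unity_rootE.
  have : root ('X^n - 1) x by rewrite Ers root_prod_XsubC.
  by rewrite /root !hornerE subr_eq0.
have := has_prim_root n0 allr urs; rewrite szrs leqnn => /(_ isT) /hasP [e _ pe].
by exists e.
Qed.

Lemma factor_Xn_subC (L : fieldType) n (z e : L) :
  (0 < n)%N -> n.-primitive_root e -> z != 0 ->
  'X^n - (z ^+ n)%:P = \prod_(k < n) ('X - (z * e ^+ k)%:P).
Proof.
move=> n0 pe z0.
pose rs := [seq z * e ^+ (val k) | k <- enum 'I_n].
have allr : all (root ('X^n - (z ^+ n)%:P)) rs.
  apply/allP => x /mapP [k _ ->]; rewrite /root hornerE hornerXn.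
  by rewrite !hornerE exprMn -exprM mulnC exprM (prim_expr_order pe) expr1n mulr1 subrr.
have urs : uniq rs.
  rewrite map_inj_uniq ?enum_uniq // => i j /(mulfI z0) /eqP.
  rewrite (eq_prim_root_expr pe) !modn_small ?ltn_ord // => /eqP; exact: val_inj.
have urs' : uniq_roots rs by rewrite uniq_rootsE.
have [q Eq] := uniq_roots_prod_XsubC allr urs'.
have Rp : \prod_(x <- rs) ('X - x%:P) = \prod_(k < n) ('X - (z * e ^+ k)%:P).
  by rewrite big_map big_enum.
rewrite Eq Rp.
have lq : lead_coef q = 1.
  have := congr1 lead_coef Eq; rewrite lead_coefM (monicP (monic_prod_XsubC _ _ _)).
  by rewrite (monicP (monicXnsubC _ n0)) mulr1.
have q0 : q != 0 by rewrite -lead_coef_eq0 lq oner_eq0.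
have sq : size q = 1%N.
  have := congr1 (fun p : {poly L} => size p) Eq.
  rewrite (size_mul q0 (monic_neq0 (monic_prod_XsubC _ _ _))).
  rewrite size_XnsubC // size_prod_XsubC size_map size_enum_ord addnS /= => /eqP.
  by rewrite -{1}[n.+1]add1n eqn_add2r => /eqP.
have /size_poly1P [c _ qc] : size q == 1%N by rewrite sq.
by move: lq; rewrite qc lead_coefC => ->; rewrite mul1r.
Qed.

Lemma char_poly_comp (R : fieldType) N' (M : 'M[R]_N') (q : {poly R}) :
  q \is monic -> size q = N'.+1 ->
  (forall i j : 'I_N', M i j = if (i == N'.-1 :> nat) then - q`_j else (i.+1 == j :> nat)%:R) ->
  char_poly M = q.
Proof.
move=> qm sq HM.
have e : (size q).-1 = N' by rewrite sq.
have key : forall N'' (e' : (size q).-1 = N'') (A : 'M[R]_((size q).-1)),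
    char_poly (castmx (e', e') A) = char_poly A.
  by move=> N'' e'; case: N'' / e' => A; rewrite castmx_id.
rewrite -[RHS](companionmxK qm) -(key _ e).
congr char_poly; apply/matrixP => i j; rewrite castmxE HM /companionmx mxE /=.
by rewrite e.
Qed.

Lemma prod_lt_succ (K : fieldType) n (F : 'I_n -> K) (i : 'I_n) :
  \prod_(j < n | (j < i.+1)%N) F j = (\prod_(j < n | (j < i)%N) F j) * F i.
Proof.
rewrite (bigD1 i) //= mulrC; congr (_ * _); apply: eq_bigl => j.
by rewrite ltnS ltn_neqAle andbC.
Qed.

Lemma part2 (K : fieldType) N m (c : {perm 'I_m} -> K) (a : 'I_m -> 'M[K]_N.+2)
    (d : 'I_N.+2 -> K) :
  (forall i, d i != 0) -> mlin_eval c a = cyc_mx d ->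
  (forall q : nat, q \in [pchar K] -> coprime q N.+2) ->
  exists a' : 'I_m -> 'M[K]_N.+2,
     forall (L : closedFieldType) (f : {rmorphism K -> L}),
       exists (z e : L),
         [/\ z != 0, N.+2.-primitive_root e &
             char_poly (map_mx f (mlin_eval c a'))
             = \prod_(k < N.+2) ('X - (z * e ^+ k)%:P)].
Proof.
move=> dnz Ha hchar.
pose D := \prod_i d i.
have D0 : D != 0 by apply/prodf_neq0 => i _.
pose s : 'rV[K]_N.+2 := \row_i \prod_(j < N.+2 | (j < i)%N) d j.
have s0 : forall i : 'I_N.+2, \prod_(j < N.+2 | (j < i)%N) d j != 0.
  by move=> i; apply/prodf_neq0 => j _.
pose si : 'rV[K]_N.+2 := \row_i (s 0 i)^-1.
pose g := diag_mx s; pose h := diag_mx si.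
have gh : g * h = 1.
  rewrite -mulmxE mul_diag_mx; apply/matrixP => i j; rewrite !mxE.
  by case: (eqVneq i j) => [->|_]; rewrite ?mulr1n ?mulr0n ?mulr0 ?mulfV.
have hg : h * g = 1.
  rewrite -mulmxE mul_diag_mx; apply/matrixP => i j; rewrite !mxE.
  by case: (eqVneq i j) => [->|_]; rewrite ?mulr1n ?mulr0n ?mulr0 ?mulVf.
exists (fun i => g * a i * h) => L f.
have cp : char_poly (mlin_eval c (fun i => g * a i * h)) = 'X^(N.+2) - D%:P.
  rewrite mlin_conj // Ha; apply: char_poly_comp.
  - exact: monicXnsubC.
  - exact: size_XnsubC.
  move=> i j; rewrite -mulmxE mul_diag_mx mul_mx_diag !mxE.
  rewrite coefB coefXn coefC (ltn_eqF (ltn_ord j)) /= sub0r opprK.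
  case: (eqVneq (val i) N.+1) => [hi|hi].
    rewrite hi modnn; case: (eqVneq (val j) 0%N) => [hj|hj]; last first.
      by rewrite mulr0 mul0r.
    have -> : \prod_(j0 < N.+2 | (j0 < j)%N) d j0 = 1.
      by rewrite big1 // => k; rewrite hj.
    have hi' : nat_of_ord i = N.+1 := hi.
    have E1 := prod_lt_succ d i; rewrite hi' in E1.
    rewrite invr1 mulr1 -E1; apply: eq_bigl => k; exact: ltn_ord.
  have ilt : ((val i).+1 < N.+2)%N.
    by rewrite ltnS ltn_neqAle hi -ltnS ltn_ord.
  rewrite (modn_small ilt) eq_sym.
  case: (eqVneq (val j) (val i).+1) => [hj|hj]; last by rewrite mulr0 mul0r.
  have -> : \prod_(j0 < N.+2 | (j0 < j)%N) d j0 = \prod_(j0 < N.+2 | (j0 < i.+1)%N) d j0.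
    by apply: eq_bigl => k; rewrite hj.
  by rewrite prod_lt_succ mulfV ?mulf_neq0.
have nL : (N.+2)%:R != 0 :> L.
  apply/negP => /eqP n0; have [p pL] := natf0_pchar (ltn0Sn _) (introT eqP n0).
  have pK : p \in [pchar K] by rewrite -(fmorph_pchar f).
  have := hchar p pK; have := dvdn_pcharf pL (N.+2); rewrite n0 eqxx => /gcdn_idPl.
  by rewrite /coprime => -> /eqP p1; move: (pcharf_prime pL); rewrite p1.
have [e pe] := prim_root_closed (ltn0Sn _) nL.
have [z hz] : exists z, root ('X^(N.+2) - (f D)%:P) z.
  by apply/closed_rootP; rewrite size_XnsubC.
have zn : z ^+ N.+2 = f D by move: hz; rewrite /root !hornerE subr_eq0 => /eqP.
have z0 : z != 0.
  by apply/eqP => z0; move: D0; rewrite -(fmorph_eq0 f) -zn z0 expr0n /= eqxx.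
exists z, e; split => //.
rewrite -map_char_poly cp rmorphB /= map_polyXn map_polyC /= -zn.
exact: factor_Xn_subC.
Qed.

Theorem theorem1p11 (K : fieldType) (n m : nat) (c : {perm 'I_m} -> K) :
  infinite_field K -> (2 <= n)%N ->
  ~ mlin_PI n c -> ~ mlin_central n c ->
  (exists (a : 'I_m -> 'M[K]_n) (d : 'I_n -> K),
      (forall i, d i != 0) /\ mlin_eval c a = cyc_mx d)
  /\
  ((forall q : nat, q \in [pchar K] -> coprime q n) ->
   exists a : 'I_m -> 'M[K]_n,
     forall (L : closedFieldType) (f : {rmorphism K -> L}),
       exists (z e : L),
         [/\ z != 0, n.-primitive_root e &
             char_poly (map_mx f (mlin_eval c a))
             = \prod_(k < n) ('X - (z * e ^+ k)%:P)]).
Proof.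
move=> inf.
case: n => [|[|N]] //= _ nPI nC.
have [r [t [x0 [y0 [xy nz]]]]] := offdiag nPI nC.
have [a [d [dnz Ha]]] := core inf xy nz.
split; first by exists a, d.
by move=> hchar; exact: part2 dnz Ha hchar.
Qed.
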